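(* $(\mathcal{N},\sim_V)\models\forall\mathsf{x}\forall\mathsf{y}[\neg AP(\mathsf{x},\mathsf{y})]$; that is, for all $\alpha,\beta\in\mathcal{N}$ it is not the case that $\forall\gamma[\neg(\gamma\sim_V\alpha)\vee\neg(\gamma\sim_V\beta)]$.
   Context: Intuitionistic mathematics (constructive reading of logical constants; Markov's Principle not assumed), with Brouwer's Continuity Principle as an axiom (for every $R\subseteq\mathcal{N}\times\omega$, if $\forall\alpha\exists n[\alpha Rn]$ then $\forall\alpha\exists m\exists n\forall\beta[\overline{\alpha}m\sqsubset\beta\rightarrow\beta Rn]$, where $\overline{\alpha}m=\langle\alpha(0),\dots,\alpha(m-1)\rangle$ and $\sqsubset$ is ''initial segment of''). $\mathcal{N}=\omega^\omega$; $\alpha\sim_V\beta$ iff $\exists n\forall m>n[\alpha(m)=\beta(m)]$. $AP(\mathsf{x},\mathsf{y})$ is the formula $\forall\mathsf{z}[\neg(\mathsf{z}=\mathsf{x})\vee\neg(\mathsf{z}=\mathsf{y})]$, with $=$ interpreted by $\sim_V$; satisfaction read intuitionistically. *)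

(* Defs.v *)
From Stdlib Require Import Arith.

Definition Baire := nat -> nat.

Definition simV (alpha beta : Baire) : Prop :=
  exists n : nat, forall m : nat, n < m -> alpha m = beta m.

Definition extends_prefix (alpha : Baire) (m : nat) (beta : Baire) : Prop :=
  forall i : nat, i < m -> beta i = alpha i.

Definition BCP : Prop :=
  forall R : Baire -> nat -> Prop,
    (forall alpha : Baire, exists n : nat, R alpha n) ->
    forall alpha : Baire, exists m : nat, exists n : nat,
      forall beta : Baire, extends_prefix alpha m beta -> R beta n.

Definition AP (alpha beta : Baire) : Prop :=
  forall gamma : Baire, ~ simV gamma alpha \/ ~ simV gamma beta.

(* Main.v *)
Require Import Defs.
From Stdlib Require Import Arith Lia.

Theorem theorem9p3 :
  BCP -> forall alpha beta : Baire, ~ AP alpha beta.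
Proof.
  intros bcp alpha beta ap.
  destruct (bcp (fun g n => (n = 0 /\ ~ simV g alpha) \/ (n = 1 /\ ~ simV g beta))
    (fun g => match ap g with
              | or_introl h => ex_intro _ 0 (or_introl (conj eq_refl h))
              | or_intror h => ex_intro _ 1 (or_intror (conj eq_refl h))
              end) alpha) as [m [n H]].
  set (g := fun i => if i <? m then alpha i else beta i).
  assert (Hg : extends_prefix alpha m g).
  { intros i Hi. unfold g. destruct (Nat.ltb_spec i m); [reflexivity | lia]. }
  assert (Ha : extends_prefix alpha m alpha) by (intros i _; reflexivity).
  destruct (H alpha Ha) as [[-> h] | [-> h]].
  - apply h. exists 0. intros; reflexivity.
  - destruct (H g Hg) as [[e _] | [_ h2]]; [discriminate|].
    apply h2. exists m. intros k Hk. unfold g.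
    destruct (Nat.ltb_spec k m); [lia | reflexivity].
Qed.
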